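(* Let $M_G$ be a connected mixed graph. Then $\operatorname{rank}N(M_G)=3$ if and only if $T_{M_G}$ is either a mixed triangle, or a mixed graph whose underlying graph is $K_4$ and among whose three mixed $4$-cycles two are positive and one is semi-negative.
   Context: A mixed graph $M_G$ is obtained from a finite simple graph $G$ by orienting the edges of some subset of $E(G)$; it is connected if $G$ is. With $\omega=\frac{1+\mathbf{i}\sqrt3}{2}$, $N(M_G)=(n_{st})$ has entry $\omega$ for an arc from $u_s$ to $u_t$, $\bar\omega$ for an arc from $u_t$ to $u_s$, $1$ for an undirected edge, $0$ otherwise. A mixed cycle is a mixed subgraph whose underlying graph is a cycle $v_1\cdots v_lv_1$, with weight $n_{12}\cdots n_{l1}$; positive means weight $1$, semi-negative means weight $-\omega$ or $-\bar\omega$. A mixed triangle is a mixed graph whose underlying graph is $K_3$. Switching: $\mathbb{T}_6=\{1,-1,\omega,\bar\omega,-\omega,-\bar\omega\}$; given a partition $V=\bigcup_{j\in\mathbb{T}_6}V_j$ into possibly empty sets, an edge or arc $xy$ has type $(j,k)$ if $x\in V_j,y\in V_k$ (arcs directed from $x$ to $y$); the partition is admissible if every undirected edge has type $(j,j)$ or $(j,\omega j)$ and every arc has type $(j,j)$, $(j,\bar\omega j)$ or $(j,-\omega j)$ for some $j$; a three-way switching replaces each undirected edge of type $(j,\omega j)$ by an arc from $V_j$ to $V_{\omega j}$, each arc of type $(j,\bar\omega j)$ by an undirected edge, and reverses each arc of type $(j,-\omega j)$; two mixed graphs on the same vertex set are switching equivalent if one is obtained from the other by three-way switchings and reversing all arcs.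 Two vertices $u,v$ of $M_G$ are twins if $M_G$ is switching equivalent to a mixed graph $M'_G$ with $N(M'_G)_{uj}=N(M'_G)_{vj}$ for all vertices $j$. $T_{M_G}$ is the induced mixed subgraph obtained from $M_G$ by deleting all but one vertex from every set of twins. *)

(* Defs.v *)
From HB Require Import structures.
From mathcomp Require Import all_boot all_order all_algebra all_field.
From Stdlib Require Import Relation_Operators.
Set Implicit Arguments. Unset Strict Implicit. Unset Printing Implicit Defensive.
Import Order.TTheory GRing.Theory Num.Theory.
Local Open Scope ring_scope.

Definition omega : algC := (1 + 'i * sqrtC 3) / 2.
Definition omegab : algC := (1 - 'i * sqrtC 3) / 2.

Definition T6 : seq algC := [:: 1; -1; omega; omegab; - omega; - omegab].

(* A mixed graph on the vertex set 'I_n: underlying simple graph [ug] and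
   the set of arcs [arc] (arc x y = arc directed from x to y). *)
Record mixed_graph (n : nat) := MixedGraph { ug : rel 'I_n ; arc : rel 'I_n }.

Definition mixed_wf n (M : mixed_graph n) : Prop :=
  [/\ symmetric (ug M), irreflexive (ug M),
      (forall x y, arc M x y -> ug M x y) &
      (forall x y, ~~ (arc M x y && arc M y x))].

Definition uedge n (M : mixed_graph n) (x y : 'I_n) : bool :=
  [&& ug M x y, ~~ arc M x y & ~~ arc M y x].

Definition Nentry n (M : mixed_graph n) (s t : 'I_n) : algC :=
  if arc M s t then omega else if arc M t s then omegab
  else if ug M s t then 1 else 0.

Definition Nmx n (M : mixed_graph n) : 'M[algC]_n := \matrix_(s, t) Nentry M s t.

Definition mixed_connected n (M : mixed_graph n) : Prop :=
  forall x y : 'I_n, connect (ug M) x y.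

(* a partition of V into the classes V_j, j in T6, given by the label f x = j *)
Definition admissible n (M : mixed_graph n) (f : 'I_n -> algC) : Prop :=
  [/\ (forall x, f x \in T6),
      (forall x y, uedge M x y ->
          [|| f y == f x, f y == omega * f x | f x == omega * f y]) &
      (forall x y, arc M x y ->
          [|| f y == f x, f y == omegab * f x | f y == - omega * f x])].

Definition switched_arc n (M : mixed_graph n) (f : 'I_n -> algC) (x y : 'I_n) : bool :=
  [|| uedge M x y && (f y == omega * f x),
      arc M x y && (f y == f x)
    | arc M y x && (f x == - omega * f y)].

Definition switch_step n (M M' : mixed_graph n) : Prop :=
  (exists f, admissible M f /\
     forall x y, ug M' x y = ug M x y /\ arc M' x y = switched_arc M f x y)
  \/ (forall x y, ug M' x y = ug M x y /\ arc M' x y = arc M y x).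

Definition switch_equiv n : mixed_graph n -> mixed_graph n -> Prop :=
  @clos_refl_trans (mixed_graph n) (@switch_step n).

Definition twins n (M : mixed_graph n) (u v : 'I_n) : Prop :=
  exists M', switch_equiv M M' /\ forall j, Nentry M' u j = Nentry M' v j.

(* S keeps exactly one vertex from every set of twins; T_{M_G} is the
   mixed subgraph of M induced on S *)
Definition twin_reps n (M : mixed_graph n) (S : {set 'I_n}) : Prop :=
  (forall v, exists2 u, u \in S & twins M u v) /\
  (forall u v, u \in S -> v \in S -> twins M u v -> u = v).

Definition cycle4_weight n (M : mixed_graph n) (a b c d : 'I_n) : algC :=
  Nentry M a b * Nentry M b c * Nentry M c d * Nentry M d a.

Definition positive_w (w : algC) : bool := w == 1.
Definition seminegative_w (w : algC) : bool := (w == - omega) || (w == - omegab).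

Definition induced_mixed_triangle n (M : mixed_graph n) (S : {set 'I_n}) : Prop :=
  #|S| = 3 /\ {in S &, forall x y, x != y -> ug M x y}.

Definition induced_K4_2pos_1semineg n (M : mixed_graph n) (S : {set 'I_n}) : Prop :=
  #|S| = 4 /\ {in S &, forall x y, x != y -> ug M x y} /\
  exists a b c d, S = [set a; b; c; d] /\
    let ws := [:: cycle4_weight M a b c d; cycle4_weight M a b d c;
                  cycle4_weight M a c b d] in
    count positive_w ws = 2%N /\ count seminegative_w ws = 1%N.

(* Main.v *)
From Stdlib Require Import ZArith Relation_Operators.
From HB Require Import structures.
From mathcomp Require Import all_boot all_order all_algebra all_field.
From mathcomp Require Import ssrZ ring.
Require Import Defs.
Set Implicit Arguments. Unset Strict Implicit. Unset Printing Implicit Defensive.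
Import Order.TTheory GRing.Theory Num.Theory.
Local Open Scope ring_scope.

Definition zi (z : Z) : algC := (int_of_Z z)%:~R.
Lemma ziD a b : zi (Z.add a b) = zi a + zi b.
Proof. by rewrite /zi -intrD; congr (_%:~R); exact: (rmorphD int_of_Z). Qed.
Lemma ziM a b : zi (Z.mul a b) = zi a * zi b.
Proof. by rewrite /zi -intrM; congr (_%:~R); exact: (rmorphM int_of_Z). Qed.
Lemma ziN a : zi (Z.opp a) = - zi a.
Proof. by rewrite /zi (rmorphN int_of_Z) mulrNz. Qed.
Lemma zi_inj a b : zi a = zi b -> a = b.
Proof. by move/eqP; rewrite /zi eqr_int => /eqP/(can_inj int_of_ZK). Qed.
Lemma zi_conj a : (zi a)^* = zi a.
Proof. by rewrite /zi conj_intr. Qed.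
Lemma zi0 : zi Z0 = 0. Proof. by []. Qed.
Lemma zi1 : zi (Zpos xH) = 1. Proof. by []. Qed.

Lemma it3 : ('i * sqrtC 3) * ('i * sqrtC 3) = -3 :> algC.
Proof. by rewrite mulrACA -!expr2 sqrCi sqrtCK mulN1r. Qed.
Lemma omega2 : omega * omega = omega - 1.
Proof. rewrite /omega; set t := 'i * sqrtC 3.
have ht : t * t = -3 by exact: it3.
apply/eqP; rewrite -subr_eq0; apply/eqP.
have -> : (1 + t) / 2 * ((1 + t) / 2) - ((1 + t) / 2 - 1) = (t * t + 3) / 4.
  by field.
by rewrite ht addNr mul0r.
Qed.
Lemma omegabE : omegab = 1 - omega.
Proof. by rewrite /omegab /omega; field. Qed.
Lemma conj_omega : omega^* = 1 - omega.
Proof. rewrite -omegabE /omega /omegab.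
rewrite !rmorphM rmorphD !rmorphM /= conjCi rmorph1 fmorphV /= rmorph_nat.
rewrite (conj_Creal (x := sqrtC 3)) ?mulNr //. by rewrite realE sqrtC_ge0 ler0n. Qed.
Lemma om_ne : 2 * omega - 1 != 0.
Proof. apply/eqP => h.
have : (2 * omega - 1) * (2 * omega - 1) = -3.
  have -> : (2 * omega - 1) * (2 * omega - 1) = 4 * (omega * omega) - 4 * omega + 1 :> algC by ring.
  rewrite omega2; ring.
rewrite h mul0r => /eqP; rewrite eq_sym oppr_eq0 pnatr_eq0 //.
Qed.

Definition zw := (Z * Z)%type.
Definition emb (p : zw) : algC := zi p.1 + zi p.2 * omega.
Definition zadd (p q : zw) : zw := (Z.add p.1 q.1, Z.add p.2 q.2).
Definition zmul (p q : zw) : zw :=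
  (Z.sub (Z.mul p.1 q.1) (Z.mul p.2 q.2), Z.add (Z.add (Z.mul p.1 q.2) (Z.mul p.2 q.1)) (Z.mul p.2 q.2)).
Definition zopp (p : zw) : zw := (Z.opp p.1, Z.opp p.2).
Definition zcj (p : zw) : zw := (Z.add p.1 p.2, Z.opp p.2).

Lemma ziB a b : zi (Z.sub a b) = zi a - zi b.
Proof. by rewrite -ziN -ziD. Qed.

Lemma embD p q : emb (zadd p q) = emb p + emb q.
Proof. rewrite /emb /= !ziD; ring. Qed.
Lemma embM p q : emb (zmul p q) = emb p * emb q.
Proof. rewrite /emb /= ziB !ziD !ziM.
set a := zi p.1; set b := zi p.2; set c := zi q.1; set d := zi q.2.
have -> : (a + b * omega) * (c + d * omega) = a * c + (a * d + b * c) * omega + b * d * (omega * omega) by ring.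
rewrite omega2; ring. Qed.
Lemma embN p : emb (zopp p) = - emb p.
Proof. rewrite /emb /= !ziN; ring. Qed.
Lemma embC p : (emb p)^* = emb (zcj p).
Proof. rewrite /emb /= rmorphD rmorphM /= !zi_conj conj_omega ziD ziN; ring. Qed.
Lemma emb_inj p q : emb p = emb q -> p = q.
Proof.
case: p q => [a b] [c d] /= h.
have h1 : (zi a - zi c) + (zi b - zi d) * omega = 0.
  by move: h; rewrite /emb /= => h; rewrite -[RHS](subrr (zi c + zi d * omega)) -{1}h; ring.
have h2 : (zi a - zi c) + (zi b - zi d) * (1 - omega) = 0.
  by have := congr1 (fun x : algC => x^*) h1; rewrite rmorphD rmorphM /= !rmorphB /= !zi_conj conj_omega rmorph0.
have h3 : (zi b - zi d) * (2 * omega - 1) = 0.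
  by rewrite -[RHS](subrr 0) -{1}h1 -h2; ring.
move/eqP: h3; rewrite mulf_eq0 (negPf om_ne) orbF subr_eq0 => /eqP/zi_inj hb.
subst d; move: h1; rewrite subrr mul0r addr0 => /eqP; rewrite subr_eq0 => /eqP/zi_inj ->. done.
Qed.


Notation z1 := (Zpos xH).
Notation zm1 := (Zneg xH).
Definition zw0 : zw := (Z0, Z0).
Definition zw1 : zw := (z1, Z0).
Definition zww : zw := (Z0, z1).
Definition zwb : zw := (z1, zm1).
Definition zmw : zw := (Z0, zm1).
Definition zmwb : zw := (zm1, z1).
Definition zmone : zw := (zm1, Z0).

Lemma emb0 : emb zw0 = 0. Proof. by rewrite /emb /= /zi /= mul0r addr0. Qed.
Lemma emb1 : emb zw1 = 1. Proof. by rewrite /emb /= /zi /= mul0r addr0. Qed.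
Lemma embw : emb zww = omega. Proof. by rewrite /emb /= /zi /= mul1r add0r. Qed.
Lemma embwb : emb zwb = omegab. Proof. by rewrite /emb /= /zi /= omegabE mulN1r. Qed.
Lemma embmw : emb zmw = - omega. Proof. by rewrite /emb /= /zi /= mulN1r add0r. Qed.
Lemma embmwb : emb zmwb = - omegab. Proof. by rewrite /emb /= /zi /= omegabE mul1r opprB addrC. Qed.
Lemma embmone : emb zmone = -1. Proof. by rewrite /emb /= /zi /= mul0r addr0. Qed.

Lemma emb_eq p q : (emb p == emb q) = (p == q).
Proof. by apply/eqP/eqP => [/emb_inj|->]. Qed.

Definition cz (k : nat) : zw :=
  match k with 0 => zw0 | 1 => zw1 | 2 => zww | _ => zwb end.

Definition ncode n (M : mixed_graph n) s t : nat :=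
  if arc M s t then 2 else if arc M t s then 3 else if ug M s t then 1 else 0.

Lemma NentryE n (M : mixed_graph n) s t : Nentry M s t = emb (cz (ncode M s t)).
Proof.
rewrite /Nentry /ncode; case: (arc M s t); first by rewrite embw.
case: (arc M t s); first by rewrite embwb.
by case: (ug M s t); rewrite ?emb1 ?emb0.
Qed.

Definition T6z : seq zw := [:: zw1; zmone; zww; zwb; zmw; zmwb].
Lemma T6E (a : algC) : a \in T6 -> exists2 t, t \in T6z & a = emb t.
Proof.
rewrite !inE => H.
case/orP: H => [/eqP->|H]; first by exists zw1; rewrite ?emb1.
case/orP: H => [/eqP->|H]; first by exists zmone; rewrite ?embmone.
case/orP: H => [/eqP->|H]; first by exists zww; rewrite ?embw.
case/orP: H => [/eqP->|H]; first by exists zwb; rewrite ?embwb.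
case/orP: H => [/eqP->|/eqP->]; first by exists zmw; rewrite ?embmw.
by exists zmwb; rewrite ?embmwb.
Qed.
Lemma T6I t : t \in T6z -> emb t \in T6.
Proof.
rewrite !inE => H.
do 5 (case/orP: H => [/eqP->|H]; first by rewrite ?emb1 ?embmone ?embw ?embwb ?embmw ?embmwb eqxx ?orTb ?orbT).
by move/eqP: H => ->; rewrite embmwb eqxx ?orTb ?orbT.
Qed.

Definition loc_sa (u p q : bool) (tx ty : zw) : bool :=
  [|| [&& u, ~~ p & ~~ q] && (ty == zmul zww tx), p && (ty == tx) | q && (tx == zmul zmw ty)].
Definition loc_code u p q tx ty : nat :=
  if loc_sa u p q tx ty then 2 else if loc_sa u q p ty tx then 3 else if u then 1 else 0.
Definition ocode (u p q : bool) : nat := if p then 2 else if q then 3 else if u then 1 else 0.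
Definition adm_loc (u p q : bool) (tx ty : zw) : bool :=
  ([&& u, ~~ p & ~~ q] ==> [|| ty == tx, ty == zmul zww tx | tx == zmul zww ty]) &&
  (p ==> [|| ty == tx, ty == zmul zwb tx | ty == zmul zmw tx]).
Definition V4z : seq zw := [:: zw0; zw1; zww; zwb].
Definition bools := [:: true; false].

Definition check1 : bool :=
  all (fun u => all (fun p => all (fun q => all (fun tx => all (fun ty =>
   (p ==> u) ==> (q ==> u) ==> ~~ (p && q) ==> adm_loc u p q tx ty ==> adm_loc u q p ty tx ==>
   (cz (loc_code u p q tx ty) == zmul (zmul (zcj tx) ty) (cz (ocode u p q))) &&
   ~~ (loc_sa u p q tx ty && loc_sa u q p ty tx)) T6z) T6z) bools) bools) bools.
Lemma check1_ok : check1. Proof. by vm_compute. Qed.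

Definition check2 : bool :=
  all (fun u => all (fun p => all (fun q => all (fun tx => all (fun ty =>
   (p ==> u) ==> (q ==> u) ==> ~~ (p && q) ==>
   (zmul (zmul (zcj tx) ty) (cz (ocode u p q)) \in V4z) ==>
   (zmul (zmul (zcj ty) tx) (cz (ocode u q p)) \in V4z) ==>
   adm_loc u p q tx ty) T6z) T6z) bools) bools) bools.
Lemma check2_ok : check2. Proof. by vm_compute. Qed.

Definition check3 : bool :=
  all (fun tx => (zcj tx \in T6z) && (zmul tx (zcj tx) == zw1) &&
     all (fun ty => zmul tx ty \in T6z) T6z) T6z.
Lemma check3_ok : check3. Proof. by vm_compute. Qed.

Lemma in_bools b : b \in bools. Proof. by case: b. Qed.

Lemma check1_inst (u p q : bool) (tx ty : zw) : tx \in T6z -> ty \in T6z ->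
   (p -> u) -> (q -> u) -> ~~ (p && q) -> adm_loc u p q tx ty -> adm_loc u q p ty tx ->
   (cz (loc_code u p q tx ty) = zmul (zmul (zcj tx) ty) (cz (ocode u p q))) /\
   ~~ (loc_sa u p q tx ty && loc_sa u q p ty tx).
Proof.
move=> htx hty hpu hqu hpq h1 h2.
have := check1_ok; rewrite /check1 => /allP/(_ u (in_bools u))/allP/(_ p (in_bools p))
  /allP/(_ q (in_bools q))/allP/(_ tx htx)/allP/(_ ty hty).
rewrite (introT implyP hpu) (introT implyP hqu) hpq h1 h2 /= => /andP[/eqP -> ->]; done.
Qed.

Lemma check2_inst (u p q : bool) (tx ty : zw) : tx \in T6z -> ty \in T6z ->
   (p -> u) -> (q -> u) -> ~~ (p && q) ->
   (zmul (zmul (zcj tx) ty) (cz (ocode u p q)) \in V4z) ->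
   (zmul (zmul (zcj ty) tx) (cz (ocode u q p)) \in V4z) ->
   adm_loc u p q tx ty.
Proof.
move=> htx hty hpu hqu hpq h1 h2.
have := check2_ok; rewrite /check2 => /allP/(_ u (in_bools u))/allP/(_ p (in_bools p))
  /allP/(_ q (in_bools q))/allP/(_ tx htx)/allP/(_ ty hty).
by rewrite (introT implyP hpu) (introT implyP hqu) hpq h1 h2.
Qed.

Lemma T6P a : a \in T6 -> a * a^* = 1 /\ a^* \in T6.
Proof.
case/T6E => t ht ->; have := check3_ok; rewrite /check3 => /allP/(_ t ht)/andP[/andP[h1 /eqP h2] _].
by rewrite embC -embM h2 emb1 T6I.
Qed.
Lemma T6_mul a b : a \in T6 -> b \in T6 -> a * b \in T6.
Proof.
case/T6E => t ht ->; case/T6E => s hs ->; have := check3_ok; rewrite /check3 => /allP/(_ t ht)/andP[_ /allP/(_ s hs) h].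
by rewrite -embM T6I.
Qed.

Section WF.
Variables (n : nat) (M : mixed_graph n).
Hypothesis wf : mixed_wf M.
Lemma wf_sym x y : ug M y x = ug M x y. Proof. by case: wf => s _ _ _; rewrite s. Qed.
Lemma wf_irr x : ug M x x = false. Proof. by case: wf => _ i _ _; rewrite i. Qed.
Lemma wf_arc x y : arc M x y -> ug M x y. Proof. by case: wf => _ _ a _; apply: a. Qed.
Lemma wf_anti x y : ~~ (arc M x y && arc M y x). Proof. by case: wf => _ _ _ a; apply: a. Qed.
Lemma wf_arc' x y : arc M y x -> ug M x y. Proof. by move/wf_arc; rewrite wf_sym. Qed.

Lemma ncodeE x y : ncode M x y = ocode (ug M x y) (arc M x y) (arc M y x). Proof. by []. Qed.

Lemma Nentry_herm x y : Nentry M y x = (Nentry M x y)^*.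
Proof.
rewrite !NentryE embC !ncodeE wf_sym.
move: (wf_anti x y) (@wf_arc x y) (@wf_arc' x y).
case: (arc M x y); case: (arc M y x); case: (ug M x y) => h1 h2 h3;
  first [ reflexivity | by have := h2 isT | by have := h3 isT | by [] ].
Qed.
Lemma Nentry_diag x : Nentry M x x = 0.
Proof.
rewrite NentryE ncodeE wf_irr.
have := @wf_arc x x; rewrite wf_irr; case: (arc M x x) => [/(_ isT)//|_] /=; by rewrite emb0.
Qed.
Lemma Nentry_ug x y : (Nentry M x y != 0) = ug M x y.
Proof.
rewrite NentryE ncodeE -emb0 emb_eq.
move: (@wf_arc x y) (@wf_arc' x y).
case: (arc M x y); case: (arc M y x); case: (ug M x y) => h2 h3;
  first [ reflexivity | by have := h2 isT | by have := h3 isT | by [] ].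
Qed.
End WF.

Lemma adm_loc_of n (M : mixed_graph n) f x y tx ty : admissible M f ->
  f x = emb tx -> f y = emb ty -> adm_loc (ug M x y) (arc M x y) (arc M y x) tx ty.
Proof.
case=> _ hu ha fx fy; rewrite /adm_loc; apply/andP; split; apply/implyP => h.
- by have := hu x y h; rewrite fx fy -embw -!embM !emb_eq.
- by have := ha x y h; rewrite fx fy -embmw -embwb -!embM !emb_eq.
Qed.

Lemma sa_loc n (M : mixed_graph n) f x y tx ty :
  f x = emb tx -> f y = emb ty ->
  switched_arc M f x y = loc_sa (ug M x y) (arc M x y) (arc M y x) tx ty.
Proof. by move=> fx fy; rewrite /switched_arc /uedge /loc_sa fx fy -embmw -embw -!embM !emb_eq. Qed.

Lemma sw_entry n (M M' : mixed_graph n) f : mixed_wf M -> admissible M f ->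
  (forall x y, ug M' x y = ug M x y /\ arc M' x y = switched_arc M f x y) ->
  forall x y, Nentry M' x y = (f x)^* * f y * Nentry M x y /\ ~~ (arc M' x y && arc M' y x).
Proof.
move=> wf adm hM x y.
have [hT _ _] := adm.
have [tx htx fx] := T6E (hT x).
have [ty hty fy] := T6E (hT y).
have [hu1 ha1] := hM x y; have [hu2 ha2] := hM y x.
have e1 := sa_loc M fx fy; have e2 := sa_loc M fy fx.
rewrite (wf_sym wf) in e2.
have a2 := adm_loc_of adm fy fx; rewrite (wf_sym wf) in a2.
have [c1 c2] := check1_inst htx hty (@wf_arc _ _ wf x y) (@wf_arc' _ _ wf x y) (wf_anti wf x y)
   (adm_loc_of adm fx fy) a2.
split; last by rewrite ha1 ha2 e1 e2.
rewrite NentryE (NentryE M) ncodeE /ncode ha1 ha2 hu1 e1 e2.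
by rewrite -/(loc_code _ _ _ tx ty) c1 fx fy embC -!embM.
Qed.

Definition cj (b : bool) (z : algC) := if b then z^* else z.
Lemma cjM b x y : cj b (x * y) = cj b x * cj b y. Proof. by case: b => //=; rewrite rmorphM. Qed.
Lemma cjC b x : cj b (x^*) = (cj b x)^*. Proof. by case: b. Qed.
Lemma cjK b1 b2 x : cj b2 (cj b1 x) = cj (b1 (+) b2) x.
Proof. by case: b1; case: b2 => //=; rewrite conjCK. Qed.
Lemma cj_T6 b x : x \in T6 -> cj b x \in T6. Proof. by case: b => // /T6P[]. Qed.
Lemma one_T6 : (1 : algC) \in T6. Proof. by rewrite /T6 inE eqxx. Qed.

Definition sinv n (M M' : mixed_graph n) : Prop :=
  mixed_wf M' /\ exists d : 'I_n -> algC, (forall x, d x \in T6) /\ exists b : bool,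
    forall x y, Nentry M' x y = (d x)^* * d y * cj b (Nentry M x y).

Lemma step_inv n (M M' : mixed_graph n) : mixed_wf M -> switch_step M M' -> sinv M M'.
Proof.
move=> wf [[f [adm hM]] | hM].
- have hE := sw_entry wf adm hM.
  split.
    split.
    + by move=> x y; rewrite !(proj1 (hM _ _)) (wf_sym wf).
    + by move=> x; rewrite (proj1 (hM _ _)) (wf_irr wf).
    + move=> x y; rewrite (proj1 (hM _ _)) (proj2 (hM _ _)) /switched_arc /uedge.
      case/or3P => [/andP[/and3P[]] // | /andP[/(wf_arc wf)] // | /andP[/(wf_arc' wf)] //].
    + by move=> x y; exact: (proj2 (hE x y)).
  by exists f; split; [case: adm | exists false => x y; rewrite (proj1 (hE x y))].
- split.
    split.
    + by move=> x y; rewrite !(proj1 (hM _ _)) (wf_sym wf).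
    + by move=> x; rewrite (proj1 (hM _ _)) (wf_irr wf).
    + by move=> x y; rewrite (proj1 (hM _ _)) (proj2 (hM _ _)) => /(wf_arc' wf).
    + by move=> x y; rewrite !(proj2 (hM _ _)) andbC (wf_anti wf).
  exists (fun _ => 1); split; first by move=> _; exact: one_T6.
  exists true => x y /=; rewrite rmorph1 !mul1r -(Nentry_herm wf).
  by rewrite /Nentry !(proj2 (hM _ _)) (proj1 (hM _ _)) (wf_sym wf).
Qed.

Lemma equiv_inv n (M M' : mixed_graph n) : mixed_wf M -> switch_equiv M M' -> sinv M M'.
Proof.
move=> wf h; elim: h wf => {M M'}.
- by move=> M M' st wf; exact: step_inv.
- move=> M wf; split=> //; exists (fun _ => 1); split; first by move=> _; exact: one_T6.
  by exists false => x y; rewrite rmorph1 !mul1r.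
- move=> M1 M2 M3 _ IH1 _ IH2 wf.
  have [wf2 [d [hd [b1 e1]]]] := IH1 wf.
  have [wf3 [e [he [b2 e2]]]] := IH2 wf2.
  split=> //; exists (fun x => cj b2 (d x) * e x); split.
    by move=> x; apply: T6_mul; [apply: cj_T6 | ].
  exists (b1 (+) b2) => x y; rewrite e2 e1 !cjM cjC -cjK rmorphM /=.
  ring.
Qed.

Lemma twins_prop n (M : mixed_graph n) u v : mixed_wf M -> twins M u v ->
  exists2 l, l \in T6 & forall j, Nentry M u j = l * Nentry M v j.
Proof.
move=> wf [M' [heq hj]].
have [_ [d [hd [b e]]]] := equiv_inv wf heq.
exists (cj b (d u * (d v)^*)); first by apply: cj_T6; apply: T6_mul => //; case: (T6P (hd v)).
move=> j; have := hj j; rewrite !e.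
have [nu _] := T6P (hd u); have [nv _] := T6P (hd v); have [nj _] := T6P (hd j).
move=> h.
have h2 : cj b (Nentry M u j) = d u * (d v)^* * cj b (Nentry M v j).
  have := congr1 (fun z => d u * (d j)^* * z) h.
  have -> : d u * (d j)^* * ((d u)^* * d j * cj b (Nentry M u j)) =
     (d u * (d u)^*) * (d j * (d j)^*) * cj b (Nentry M u j) by ring.
  rewrite nu nj !mul1r => ->.
  have -> : d u * (d j)^* * ((d v)^* * d j * cj b (Nentry M v j)) =
     d u * (d v)^* * (d j * (d j)^*) * cj b (Nentry M v j) by ring.
  by rewrite nj mulr1.
have := congr1 (cj b) h2; rewrite cjM !cjK addbb /=; done.
Qed.

Lemma cz_V4 k : cz k \in V4z. Proof. by case: k => [|[|[|k]]]. Qed.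

Lemma adm_of n (M : mixed_graph n) f : mixed_wf M -> (forall x, f x \in T6) ->
  (forall x y, exists2 t, t \in V4z & (f x)^* * f y * Nentry M x y = emb t) -> admissible M f.
Proof.
move=> wf hT hV.
have hl : forall x y tx ty, f x = emb tx -> f y = emb ty -> tx \in T6z -> ty \in T6z ->
    adm_loc (ug M x y) (arc M x y) (arc M y x) tx ty.
  move=> x y tx ty fx fy htx hty.
  apply: check2_inst => //; [exact: (wf_arc wf) | exact: (wf_arc' wf) | exact: (wf_anti wf) | |].
  - have [t ht e] := hV x y; rewrite NentryE ncodeE fx fy embC -!embM in e.
    by rewrite (emb_inj e).
  - have [t ht e] := hV y x; rewrite NentryE ncodeE fx fy embC -!embM (wf_sym wf) in e.
    by rewrite (emb_inj e).
split=> // x y h.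
- have [tx htx fx] := T6E (hT x); have [ty hty fy] := T6E (hT y).
  have /andP[/implyP/(_ h) + _] := hl x y tx ty fx fy htx hty.
  by rewrite fx fy -embw -!embM !emb_eq.
- have [tx htx fx] := T6E (hT x); have [ty hty fy] := T6E (hT y).
  have /andP[_ /implyP/(_ h)] := hl x y tx ty fx fy htx hty.
  by rewrite fx fy -embmw -embwb -!embM !emb_eq.
Qed.

Lemma prop_twins n (M : mixed_graph n) u v l : mixed_wf M -> l \in T6 ->
  (forall j, Nentry M u j = l * Nentry M v j) -> twins M u v.
Proof.
move=> wf hl hp.
have [nl hlc] := T6P hl.
have nl' : l^* * l = 1 by rewrite mulrC.
set f := fun z => if z == u then l else 1.
have hT : forall x, f x \in T6 by move=> x; rewrite /f; case: (x == u) => //; exact: one_T6.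
have hV : forall x y, exists2 t, t \in V4z & (f x)^* * f y * Nentry M x y = emb t.
  move=> x y; rewrite /f.
  have inV : forall a b, exists2 t, t \in V4z & Nentry M a b = emb t.
    by move=> a b; exists (cz (ncode M a b)); [apply: cz_V4 | apply: NentryE].
  case: (eqVneq x u) => [->|_]; case: (eqVneq y u) => [->|_].
  - by rewrite nl' mul1r.
  - suff -> : l^* * 1 * Nentry M u y = Nentry M v y by [].
    by rewrite hp; transitivity (l^* * l * Nentry M v y); [ring | rewrite nl' mul1r].
  - suff -> : 1^* * l * Nentry M x u = Nentry M x v by [].
    rewrite (Nentry_herm wf u x) hp rmorphM /= -(Nentry_herm wf v x) rmorph1.
    by transitivity (l * l^* * Nentry M x v); [ring | rewrite nl mul1r].
  - by rewrite rmorph1 !mul1r.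
have adm := adm_of wf hT hV.
pose M' := MixedGraph (ug M) (switched_arc M f).
have hM : forall x y, ug M' x y = ug M x y /\ arc M' x y = switched_arc M f x y by [].
exists M'; split.
  by apply: rt_step; left; exists f.
move=> j; rewrite !(proj1 (sw_entry wf adm hM _ _)) /f eqxx.
case: (eqVneq v u) => [vu|_].
  by rewrite vu.
case: (eqVneq j u) => [->|_].
- have h0 : Nentry M v u = 0.
    have := hp u; rewrite (Nentry_diag wf) => /esym/eqP; rewrite mulf_eq0.
    case/orP=> [/eqP l0|/eqP //]; by move: nl; rewrite l0 mul0r => /eqP; rewrite eq_sym oner_eq0.
  by rewrite (Nentry_diag wf) h0 !mulr0.
- by rewrite hp rmorph1 !mulr1 mul1r mulrA nl' mul1r.
Qed.

Lemma det3E (R : comNzRingType) (h : nat -> nat -> R) :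
  \det (\matrix_(i < 3, j < 3) h i j) =
  h 0 0 * (h 1 1 * h 2 2 - h 1 2 * h 2 1) - h 0 1 * (h 1 0 * h 2 2 - h 1 2 * h 2 0)
  + h 0 2 * (h 1 0 * h 2 1 - h 1 1 * h 2 0).
Proof.
rewrite (expand_det_row _ 0) !big_ord_recr big_ord0 /= add0r !/cofactor.
rewrite !(expand_det_row _ 0) !big_ord_recr !big_ord0 /= !add0r !/cofactor !det_mx11 !mxE /=.
rewrite !expr0 !expr1 /bump /=. 
rewrite ?addn0 ?add0n ?addn1.
ring.
Qed.

Definition det3f (R : comNzRingType) (h : nat -> nat -> R) : R :=
  h 0 0 * (h 1 1 * h 2 2 - h 1 2 * h 2 1) - h 0 1 * (h 1 0 * h 2 2 - h 1 2 * h 2 0)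
  + h 0 2 * (h 1 0 * h 2 1 - h 1 1 * h 2 0).

Definition tri n (a b c : 'I_n) (k : nat) : 'I_n :=
  match k with 0 => a | 1 => b | _ => c end.

Section Rank.
Variables (n : nat) (N : 'M[algC]_n).

Lemma rank_ge3 (a b c : 'I_n) :
  det3f (fun i j => N (tri a b c i) (tri a b c j)) != 0 -> (3 <= \rank N)%N.
Proof.
move=> hd.
pose t (i : 'I_3) := tri a b c i.
pose R := rowsub t N.
have hA : colsub t R = \matrix_(i < 3, j < 3) N (tri a b c i) (tri a b c j).
  by apply/matrixP => i j; rewrite !mxE.
have u : colsub t R \in unitmx by rewrite unitmxE hA (det3E (fun i j => N (tri a b c i) (tri a b c j))) unitfE.
have := mxrank_unit u => h3.
have h1 : (\rank (colsub t R) <= \rank R)%N.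
  have -> : colsub t R = R *m colsub t 1%:M by rewrite mulmx_colsub mulmx1.
  by apply: mxrankM_maxl.
have h2 : (\rank R <= \rank N)%N by apply: mxrankS; apply: rowsub_sub.
by rewrite -h3; apply: leq_trans h1 h2.
Qed.

Lemma rank_le3 (a b c : 'I_n) (x0 x1 x2 : 'I_n -> algC) :
  (forall v w, N v w = x0 v * N a w + x1 v * N b w + x2 v * N c w) -> (\rank N <= 3)%N.
Proof.
move=> hN.
pose t (i : 'I_3) := tri a b c i.
pose X := \matrix_(v < n, i < 3) (match val i with 0 => x0 v | 1 => x1 v | _ => x2 v end).
have -> : N = X *m rowsub t N.
  apply/matrixP => v w; rewrite !mxE !big_ord_recr big_ord0 /= add0r !mxE /=.
  exact: hN.
by apply: leq_trans (mxrankM_maxr _ _) (rank_leq_row _).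
Qed.

Lemma rank_eq3_gen : (forall i j, N j i = (N i j)^*) ->
  exists f : 'I_(\rank N) -> 'I_n, exists X : 'M[algC]_(n, \rank N),
   N = X *m rowsub f N /\ colsub f (rowsub f N) \in unitmx.
Proof.
move=> herm.
pose f := maxrankfun N; exists f.
have hfree := maxrowsub_free N.
have /submxP [X hX] : (N <= rowsub f N)%MS by rewrite eq_maxrowsub.
exists X; split=> //.
rewrite -row_free_unit -row_leq_rank.
have e1 : colsub f N = X *m colsub f (rowsub f N) by rewrite mulmx_colsub -hX.
have e2 : colsub f N = (map_mx Num.conj_op (rowsub f N))^T.
  by apply/matrixP => i j; rewrite !mxE herm.
have : \rank (colsub f N) = \rank N.
  by rewrite e2 mxrank_tr mxrank_map; move/eqP: hfree.
move=> h; apply: (leq_trans (eq_leq (esym h))); rewrite e1; apply: mxrankM_maxr.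
Qed.
End Rank.

Lemma sum3 (R : nmodType) (F : 'I_3 -> R) : \sum_i F i = F 0 + F 1 + F 2.
Proof.
rewrite !big_ord_recr big_ord0 /= add0r; congr (_ + _ + _); congr F; exact/val_inj.
Qed.

Lemma rank_eq3 n (N : 'M[algC]_n) : (forall i j, N j i = (N i j)^*) -> \rank N = 3%N ->
  exists a b c : 'I_n, exists x0 x1 x2 : 'I_n -> algC,
   (forall v w, N v w = x0 v * N a w + x1 v * N b w + x2 v * N c w) /\
   det3f (fun i j => N (tri a b c i) (tri a b c j)) != 0.
Proof.
move=> herm hk; move: (rank_eq3_gen herm); rewrite hk => -[f [X [hN hu]]].
have hf : forall i : 'I_3, f i = tri (f 0) (f 1) (f 2) i.
  by case=> [[|[|[|//]]] Hi] /=; congr f; apply/val_inj.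
exists (f 0), (f 1), (f 2), (fun v => X v 0), (fun v => X v 1), (fun v => X v 2); split.
  by move=> v w; rewrite {1}hN mxE sum3 !mxE.
have e : colsub f (rowsub f N) = \matrix_(i < 3, j < 3) N (tri (f 0) (f 1) (f 2) i) (tri (f 0) (f 1) (f 2) j).
  by apply/matrixP => i j; rewrite !mxE -!hf.
by move: hu; rewrite e unitmxE (det3E (fun i j => N (tri (f 0) (f 1) (f 2) i) (tri (f 0) (f 1) (f 2) j))) unitfE.
Qed.

Record rops (T : Type) := Rops { radd : T -> T -> T; rmul : T -> T -> T; ropp : T -> T; rcj : T -> T }.
Definition Cops : rops algC := Rops +%R *%R (fun x => - x) (fun x => x^*).
Definition Zops : rops zw := Rops zadd zmul zopp zcj.

Section Gen.
Variables (T : Type) (o : rops T).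
Definition oth (i : nat) : nat * nat := match i with 0 => (1, 2) | 1 => (0, 2) | _ => (0, 1) end%N.
Definition minor (h : nat -> nat -> T) (i j : nat) : T :=
  let (r0, r1) := oth i in let (s0, s1) := oth j in
  radd o (rmul o (h r0 s0) (h r1 s1)) (ropp o (rmul o (h r0 s1) (h r1 s0))).
Definition adjg h (j i : nat) : T := if odd (i + j) then ropp o (minor h i j) else minor h i j.
Definition sum3g (f : nat -> T) : T := radd o (radd o (f 0%N) (f 1%N)) (f 2%N).
Definition detg h : T := sum3g (fun j => rmul o (h 0%N j) (adjg h j 0%N)).
Definition Bg h (c d : nat -> T) : T :=
  sum3g (fun i => sum3g (fun j => rmul o (rmul o (c j) (adjg h j i)) (rcj o (d i)))).
End Gen.

Lemma emb_Bg h c d : emb (Bg Zops h c d) = Bg Cops (fun i j => emb (h i j)) (fun i => emb (c i)) (fun i => emb (d i)).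
Proof. by rewrite /Bg /sum3g /adjg /minor /=; do 4 rewrite ?embD ?embM ?embN -?embC. Qed.
Lemma emb_detg h : emb (detg Zops h) = detg Cops (fun i j => emb (h i j)).
Proof. by rewrite /detg /sum3g /adjg /minor /=; do 4 rewrite ?embD ?embM ?embN. Qed.

Definition az (ka kb kc : nat) (i j : nat) : zw :=
  match i, j with
  | 0, 1 => cz ka | 0, 2 => cz kb | 1, 0 => zcj (cz ka) | 1, 2 => cz kc
  | 2, 0 => zcj (cz kb) | 2, 1 => zcj (cz kc) | _, _ => zw0 end%N.
Definition cv3 (c0 c1 c2 : nat) (i : nat) : zw := cz (match i with 0 => c0 | 1 => c1 | _ => c2 end)%N.
Definition idx3 := [:: 0; 1; 2]%N.
Definition propz (c d : nat -> zw) : bool :=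
  has (fun t => all (fun k => c k == zmul t (d k)) idx3) T6z.
Definition Kz (h : nat -> nat -> zw) (c : nat -> zw) (p q : nat) : zw :=
  if (p < 3)%N && (q < 3)%N then h p q else if (p == 3)%N && (q < 3)%N then c q
  else if (p < 3)%N && (q == 3)%N then zcj (c p) else zw0.
Definition wz (K : nat -> nat -> zw) (p q r s : nat) : zw := zmul (zmul (zmul (K p q) (K q r)) (K r s)) (K s p).
Definition K4c (h : nat -> nat -> zw) (c : nat -> zw) : bool :=
  let K := Kz h c in
  let ws := [:: wz K 0 1 2 3; wz K 0 1 3 2; wz K 0 2 1 3]%N in
  (count (fun w => w == zw1) ws == 2%N) && (count (fun w => (w == zmw) || (w == zmwb)) ws == 1%N).
Definition codes := [:: 0; 1; 2; 3]%N.
Definition nzcodes := [:: 1; 2; 3]%N.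
Definition inEz (h : nat -> nat -> zw) (c : nat -> zw) : bool :=
  [&& ~~ all (fun k => c k == zw0) idx3, Bg Zops h c c == zw0 & ~~ has (fun i => propz c (h i)) idx3].

Definition allc : seq (nat * nat * nat) :=
  flatten (map (fun x => flatten (map (fun y => map (fun z => (x, y, z)) codes) codes)) codes).
Definition c3 (t : nat * nat * nat) : nat -> zw := cv3 t.1.1 t.1.2 t.2.
Definition C1 : bool :=
  all (fun ka => all (fun kb => all (fun kc =>
    let h := az ka kb kc in let D := detg Zops h in
    (D != zw0) ==> [&& ka != 0%N, kb != 0%N, kc != 0%N &
     let E := [seq t <- allc | inEz h (c3 t)] in
     all (fun t => let c := c3 t in
       [&& all (fun k => c k != zw0) idx3, K4c h c &
         all (fun t' => let d := c3 t' in
           propz c d || (Bg Zops h c d \notin map (zmul D) V4z)) E]) E]) codes) codes) codes.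
Lemma C1_ok : C1. Proof. Time vm_compute. reflexivity. Qed.

Definition C2 : bool :=
  all (fun ka => all (fun kb => all (fun kc =>
    let h := az ka kb kc in (detg Zops h != zw0) &&
     all (fun c0 => all (fun c1 => all (fun c2 => let c := cv3 c0 c1 c2 in
       K4c h c ==> (Bg Zops h c c == zw0)) nzcodes) nzcodes) nzcodes) nzcodes) nzcodes) nzcodes.
Lemma C2_ok : C2. Proof. Time vm_compute. reflexivity. Qed.

Lemma core (h : nat -> nat -> algC) (x0 x1 x2 : algC) (cv cw : nat -> algC) (n0 n1 n2 : algC) :
  cv 0%N = x0 * h 0%N 0%N + x1 * h 1%N 0%N + x2 * h 2%N 0%N ->
  cv 1%N = x0 * h 0%N 1%N + x1 * h 1%N 1%N + x2 * h 2%N 1%N ->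
  cv 2%N = x0 * h 0%N 2%N + x1 * h 1%N 2%N + x2 * h 2%N 2%N ->
  n0 = (cw 0%N)^* -> n1 = (cw 1%N)^* -> n2 = (cw 2%N)^* ->
  detg Cops h * (x0 * n0 + x1 * n1 + x2 * n2) = Bg Cops h cv cw.
Proof.
move=> e0 e1 e2 -> -> ->.
rewrite /Bg /detg /sum3g /adjg /minor /= e0 e1 e2; ring.
Qed.

Lemma det3f_detg (h : nat -> nat -> algC) : det3f h = detg Cops h.
Proof. rewrite /det3f /detg /sum3g /adjg /minor /=; ring. Qed.

Lemma Bg_lin (h : nat -> nat -> algC) (l : algC) (cv cu cw : nat -> algC) :
  cv 0%N = l * cu 0%N -> cv 1%N = l * cu 1%N -> cv 2%N = l * cu 2%N ->
  Bg Cops h cv cw = l * Bg Cops h cu cw.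
Proof. move=> e0 e1 e2; rewrite /Bg /sum3g /adjg /minor /= e0 e1 e2; ring. Qed.

Lemma Bg_zero (h : nat -> nat -> algC) (cv cw : nat -> algC) :
  cv 0%N = 0 -> cv 1%N = 0 -> cv 2%N = 0 -> Bg Cops h cv cw = 0.
Proof. move=> e0 e1 e2; rewrite /Bg /sum3g /adjg /minor /= e0 e1 e2; ring. Qed.

Definition xsol (h : nat -> nat -> algC) (c : nat -> algC) (i : nat) : algC :=
  sum3g Cops (fun j => c j * adjg Cops h j i) / detg Cops h.

Lemma xsol_row (h : nat -> nat -> algC) (c : nat -> algC) (k : nat) : (k < 3)%N ->
  detg Cops h != 0 ->
  xsol h c 0%N * h 0%N k + xsol h c 1%N * h 1%N k + xsol h c 2%N * h 2%N k = c k.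
Proof.
move=> hk hD; rewrite /xsol.
apply: (mulfI hD).
have -> : forall a b e : algC, detg Cops h * (a / detg Cops h * h 0%N k + b / detg Cops h * h 1%N k + e / detg Cops h * h 2%N k)
   = a * h 0%N k + b * h 1%N k + e * h 2%N k.
  by move=> a b e; field.
by case: k hk => [|[|[|]]] // _; rewrite /detg /sum3g /adjg /minor /=; ring.
Qed.

Lemma xsol_self (h : nat -> nat -> algC) (c : nat -> algC) : detg Cops h != 0 ->
  xsol h c 0%N * (c 0%N)^* + xsol h c 1%N * (c 1%N)^* + xsol h c 2%N * (c 2%N)^* =
  Bg Cops h c c / detg Cops h.
Proof.
move=> hD; rewrite /xsol /Bg /sum3g /=; field; done.
Qed.

Lemma detg_ext (h h' : nat -> nat -> algC) :
  (forall i j, (i < 3)%N -> (j < 3)%N -> h i j = h' i j) -> detg Cops h = detg Cops h'.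
Proof. by move=> E; rewrite /detg /sum3g /adjg /minor /= !E. Qed.

Lemma ncode_codes n (M : mixed_graph n) x y : ncode M x y \in codes.
Proof. by rewrite /ncode; case: (arc M x y); case: (arc M y x); case: (ug M x y). Qed.

Lemma cz_inj k k' : k \in codes -> k' \in codes -> cz k = cz k' -> k = k'.
Proof. by rewrite !inE => /or4P[]/eqP-> /or4P[]/eqP->. Qed.

Section Tri.
Variables (n : nat) (M : mixed_graph n).
Hypothesis wf : mixed_wf M.
Variables a b c : 'I_n.
Local Notation t := (tri a b c).
Definition hz := az (ncode M a b) (ncode M a c) (ncode M b c).
Definition cvec (v : 'I_n) : nat -> zw := cv3 (ncode M v a) (ncode M v b) (ncode M v c).

Lemma Nh i k : (i < 3)%N -> (k < 3)%N -> Nentry M (t i) (t k) = emb (hz i k).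
Proof.
rewrite /hz; case: i => [|[|[|//]]] _; case: k => [|[|[|//]]] _ /=;
  first [ by rewrite (Nentry_diag wf) emb0 | by rewrite NentryE | by rewrite (Nentry_herm wf) NentryE embC ].
Qed.

Lemma Nc v i : Nentry M v (t i) = emb (cvec v i).
Proof. by rewrite NentryE; case: i => [|[|i]]. Qed.

Lemma det_emb : det3f (fun i j => Nentry M (t i) (t j)) = emb (detg Zops hz).
Proof. by rewrite det3f_detg emb_detg; apply: detg_ext => i j hi hj; rewrite Nh. Qed.

Lemma MF (x0 x1 x2 : 'I_n -> algC) :
  (forall v w, Nentry M v w = x0 v * Nentry M a w + x1 v * Nentry M b w + x2 v * Nentry M c w) ->
  forall v w, emb (detg Zops hz) * Nentry M v w = emb (Bg Zops hz (cvec v) (cvec w)).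
Proof.
move=> hx v w; rewrite emb_Bg emb_detg (hx v w).
apply: core.
- by rewrite -Nc hx -!(Nh (i:=0%N) (k:=0%N)) // -(Nh (i:=1%N) (k:=0%N)) // -(Nh (i:=2%N) (k:=0%N)).
- by rewrite -Nc hx -(Nh (i:=0%N) (k:=1%N)) // -(Nh (i:=1%N) (k:=1%N)) // -(Nh (i:=2%N) (k:=1%N)).
- by rewrite -Nc hx -(Nh (i:=0%N) (k:=2%N)) // -(Nh (i:=1%N) (k:=2%N)) // -(Nh (i:=2%N) (k:=2%N)).
- by rewrite -Nc -(Nentry_herm wf).
- by rewrite -Nc -(Nentry_herm wf).
- by rewrite -Nc -(Nentry_herm wf).
Qed.
End Tri.

Lemma card3 n (x y z : 'I_n) : uniq [:: x; y; z] -> #|[set x; y; z]| = 3.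
Proof. move/card_uniqP => h. rewrite -[3]/(size [:: x; y; z]) -h. apply: eq_card => w. by rewrite !inE -!orbA. Qed.
Lemma card4 n (x y z t : 'I_n) : uniq [:: x; y; z; t] -> #|[set x; y; z; t]| = 4.
Proof. move/card_uniqP => h. rewrite -[4]/(size [:: x; y; z; t]) -h. apply: eq_card => w. by rewrite !inE -!orbA. Qed.

Lemma T6_neq0 (l : algC) : l \in T6 -> l != 0.
Proof. by case/T6P => h _; apply/eqP => l0; move: h; rewrite l0 mul0r => /eqP; rewrite eq_sym oner_eq0. Qed.

Section H.
Variables (n : nat) (M : mixed_graph n).
Hypothesis wf : mixed_wf M.
Local Notation N := (Nentry M).

Lemma pair_rel u r u' r' (m m' : algC) : (forall w, N u w = m * N r w) -> (forall w, N u' w = m' * N r' w) ->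
  N u u' = m * m'^* * N r r'.
Proof.
move=> hu hu'; rewrite hu (Nentry_herm wf u' r) hu' rmorphM /= -(Nentry_herm wf r' r); ring.
Qed.

Lemma weight_rel u0 u1 u2 u3 r0 r1 r2 r3 (m0 m1 m2 m3 : algC) :
  m0 \in T6 -> m1 \in T6 -> m2 \in T6 -> m3 \in T6 ->
  (forall w, N u0 w = m0 * N r0 w) -> (forall w, N u1 w = m1 * N r1 w) ->
  (forall w, N u2 w = m2 * N r2 w) -> (forall w, N u3 w = m3 * N r3 w) ->
  cycle4_weight M u0 u1 u2 u3 = cycle4_weight M r0 r1 r2 r3.
Proof.
move=> t0 t1 t2 t3 h0 h1 h2 h3; rewrite /cycle4_weight.
rewrite (pair_rel h0 h1) (pair_rel h1 h2) (pair_rel h2 h3) (pair_rel h3 h0).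
have [n0 _] := T6P t0; have [n1 _] := T6P t1; have [n2 _] := T6P t2; have [n3 _] := T6P t3.
transitivity ((m0 * m0^*) * (m1 * m1^*) * (m2 * m2^*) * (m3 * m3^*) *
  (N r0 r1 * N r1 r2 * N r2 r3 * N r3 r0)); first by ring.
by rewrite n0 n1 n2 n3 !mul1r.
Qed.

Lemma col_rel u w (l : algC) : l \in T6 -> (forall j, N u j = l * N w j) -> forall y, N y w = l * N y u.
Proof.
move=> hl h y; have [nl _] := T6P hl.
rewrite (Nentry_herm wf w y) (Nentry_herm wf u y) h rmorphM /=.
transitivity (l * l^* * (N w y)^*); last by ring.
by rewrite nl mul1r.
Qed.

Lemma row_inv u w (l : algC) : l \in T6 -> (forall j, N u j = l * N w j) -> forall j, N w j = l^* * N u j.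
Proof.
move=> hl h j; have [nl _] := T6P hl; rewrite h mulrA [l^* * l]mulrC nl mul1r //.
Qed.

Lemma neighbor x y : mixed_connected M -> x != y -> exists w, ug M x w.
Proof.
move=> conn xy; have /connectP [p hp hl] := conn x y.
case: p hp hl => [_ /= yx|w p /= /andP[hw _] _]; last by exists w.
by move: xy; rewrite yx eqxx.
Qed.

Lemma ug_N x y : ug M x y -> N x y != 0.
Proof. by rewrite (Nentry_ug wf). Qed.

End H.

Lemma cz_nz k : k \in codes -> k != 0%N -> (cz k != zw0) && (zcj (cz k) != zw0).
Proof. by rewrite !inE => /or4P[]/eqP->. Qed.

Lemma in_allc x y z : x \in codes -> y \in codes -> z \in codes -> (x, y, z) \in allc.
Proof. by rewrite !inE => /or4P[]/eqP-> /or4P[]/eqP-> /or4P[]/eqP->. Qed.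

Lemma emb_nz p : (emb p != 0) = (p != zw0). Proof. by rewrite -emb0 emb_eq. Qed.

Section Fwd.
Variables (n : nat) (M : mixed_graph n).
Hypotheses (wf : mixed_wf M) (conn : mixed_connected M).
Variable S : {set 'I_n}.
Hypothesis reps : twin_reps M S.
Variables (a b c : 'I_n) (x0 x1 x2 : 'I_n -> algC).
Hypothesis hx : forall v w, Nentry M v w = x0 v * Nentry M a w + x1 v * Nentry M b w + x2 v * Nentry M c w.
Local Notation N := (Nentry M).
Local Notation hZ := (hz M a b c).
Local Notation cv := (cvec M a b c).
Local Notation Dz := (detg Zops hZ).
Hypothesis hDz : Dz != zw0.
Local Notation t := (tri a b c).

Lemma key v w : emb Dz * N v w = emb (Bg Zops hZ (cv v) (cv w)).
Proof. exact: (MF wf hx v w). Qed.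
Lemma D0 : emb Dz != 0. Proof. by rewrite emb_nz. Qed.

Lemma scal v u l : (forall k, (k < 3)%N -> emb (cv v k) = l * emb (cv u k)) -> forall w, N v w = l * N u w.
Proof.
move=> h w; apply: (mulfI D0); rewrite mulrCA !key !emb_Bg.
by apply: Bg_lin; apply: h.
Qed.

Lemma cvtri i k : (i < 3)%N -> (k < 3)%N -> cv (t i) k = hZ i k.
Proof. by move=> hi hk; apply: emb_inj; rewrite -Nc -Nh. Qed.

Lemma eq_of_prop u v l : u \in S -> v \in S -> l \in T6 -> (forall j, N u j = l * N v j) -> u = v.
Proof. by move=> hu hv hl h; case: reps => _ hU; apply: hU => //; apply: prop_twins h. Qed.


Lemma C1i : [&& ncode M a b != 0%N, ncode M a c != 0%N, ncode M b c != 0%N &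
     all (fun t => let c := c3 t in
       [&& all (fun k => c k != zw0) idx3, K4c hZ c &
         all (fun t' => let d := c3 t' in
           propz c d || (Bg Zops hZ c d \notin map (zmul Dz) V4z)) [seq t <- allc | inEz hZ (c3 t)]])
      [seq t <- allc | inEz hZ (c3 t)]].
Proof.
move: C1_ok; rewrite /C1 => /allP/(_ _ (ncode_codes M a b))/allP/(_ _ (ncode_codes M a c))
  /allP/(_ _ (ncode_codes M b c)) /implyP/(_ hDz); exact.
Qed.

Lemma codes_nz : [/\ ncode M a b != 0%N, ncode M a c != 0%N & ncode M b c != 0%N].
Proof. by case/and4P: C1i. Qed.

Lemma extra_props v : inEz hZ (cv v) ->
  [/\ forall k, (k < 3)%N -> cv v k != zw0, K4c hZ (cv v) &
      forall w, inEz hZ (cv w) -> propz (cv v) (cv w) || (Bg Zops hZ (cv v) (cv w) \notin map (zmul Dz) V4z)].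
Proof.
move=> hv; case/and4P: C1i => _ _ _ /allP hE.
have mv : forall u, inEz hZ (cv u) -> (ncode M u a, ncode M u b, ncode M u c) \in [seq t <- allc | inEz hZ (c3 t)].
  by move=> u hu; rewrite mem_filter hu in_allc ?ncode_codes.
case/and3P: (hE _ (mv v hv)) => /allP h1 h2 /allP h3; split=> //.
- by move=> k hk; apply: h1; case: k hk => [|[|[|]]].
- by move=> w hw; apply: (h3 _ (mv w hw)).
Qed.

Lemma hZnz i j : (i < 3)%N -> (j < 3)%N -> i != j -> hZ i j != zw0.
Proof.
case: codes_nz => n1 n2 n3.
have := cz_nz (ncode_codes M a b) n1; have := cz_nz (ncode_codes M a c) n2; have := cz_nz (ncode_codes M b c) n3.
move=> /andP[e1 e2] /andP[e3 e4] /andP[e5 e6].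
by rewrite /hz; case: i => [|[|[|]]] //; case: j => [|[|[|]]].
Qed.

Variables (sf : nat -> 'I_n) (lf : nat -> algC).
Hypotheses (hsS : forall i, sf i \in S) (hlT : forall i, lf i \in T6)
  (hsl : forall i j, N (sf i) j = lf i * N (t i) j).

Lemma s_adj i j : (i < 3)%N -> (j < 3)%N -> i != j -> ug M (sf i) (sf j).
Proof.
move=> hi hj ij; rewrite -(Nentry_ug wf) (pair_rel wf (hsl i) (hsl j)) (Nh wf) //.
rewrite !mulf_neq0 //; first exact: T6_neq0.
  by apply: T6_neq0; case: (T6P (hlT j)).
by rewrite emb_nz hZnz.
Qed.

Lemma s_neq i j : (i < 3)%N -> (j < 3)%N -> i != j -> sf i != sf j.
Proof.
move=> hi hj ij; apply/eqP => e; have := s_adj hi hj ij; by rewrite e (wf_irr wf).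
Qed.

Lemma is_s v i l : v \in S -> (i < 3)%N -> l \in T6 -> (forall w, N v w = l * N (t i) w) -> v = sf i.
Proof.
move=> hv hi hl h; apply: (eq_of_prop (l := l * (lf i)^*)) => //.
  by apply: T6_mul => //; case: (T6P (hlT i)).
by move=> j; rewrite h (row_inv (hlT i) (hsl i)) mulrA.
Qed.

Lemma extra_inE v : v \in S -> v != sf 0 -> v != sf 1 -> v != sf 2 -> inEz hZ (cv v).
Proof.
move=> hv n0 n1 n2; rewrite /inEz; apply/and3P; split.
- apply/negP => /allP hall.
  have h0 : forall w, N v w = 0.
    move=> w; rewrite (@scal v v 0) ?mul0r // => k hk.
    by rewrite mul0r; apply/eqP; rewrite -emb0 emb_eq; apply: hall; case: k hk => [|[|[|]]].
  have [w hw] := neighbor conn n0.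
  by move: (ug_N wf hw); rewrite h0 eqxx.
- by apply/eqP/emb_inj; rewrite -key (Nentry_diag wf) mulr0 emb0.
- apply/hasPn => i hi; apply/negP => /hasP [z hz /allP hk].
  have hi3 : (i < 3)%N by move: hi; rewrite !inE => /or3P[]/eqP->.
  have e : forall w, N v w = emb z * N (t i) w.
    apply: scal => k hk3; rewrite -embM (cvtri hi3 hk3); congr emb; apply/eqP; apply: hk.
    by case: k hk3 => [|[|[|]]].
  have := is_s hv hi3 (T6I hz) e.
  by clear hk hi e; move: hi3 n0 n1 n2; case: i => [|[|[|]]] // _ h0 h1 h2 E; rewrite E eqxx in h0 h1 h2.
Qed.

Lemma zcj_nz x : x != zw0 -> zcj x != zw0.
Proof. by rewrite -!emb_nz -embC conjC_eq0. Qed.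

Lemma two_extras v w : v \in S -> v != sf 0 -> v != sf 1 -> v != sf 2 ->
  w \in S -> w != sf 0 -> w != sf 1 -> w != sf 2 -> v = w.
Proof.
move=> hv a0 a1 a2 hw b0 b1 b2.
have hEv := extra_inE hv a0 a1 a2; have hEw := extra_inE hw b0 b1 b2.
case: (extra_props hEv) => _ _ /(_ w hEw) /orP[/hasP [z hz /allP hk] | hn].
- apply: (eq_of_prop (l := emb z)) => //; first exact: T6I.
  apply: scal => k hk3; rewrite -embM; congr emb; apply/eqP; apply: hk.
  by case: k hk3 => [|[|[|]]].
- exfalso; move/negP: hn; apply.
  have -> : Bg Zops hZ (cv v) (cv w) = zmul Dz (cz (ncode M v w)).
    by apply: emb_inj; rewrite -key embM -NentryE.
  by apply: map_f; apply: cz_V4.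
Qed.

Definition uf (v : 'I_n) (p : nat) : 'I_n := match p with 3 => v | _ => sf p end%N.
Definition rf (v : 'I_n) (p : nat) : 'I_n := match p with 3 => v | _ => t p end%N.
Definition muf (p : nat) : algC := match p with 3%N => 1 | _ => lf p end.

Lemma huf v p w : N (uf v p) w = muf p * N (rf v p) w.
Proof. by case: p => [|[|[|[|p]]]] //=; rewrite mul1r. Qed.
Lemma muf_T6 p : muf p \in T6.
Proof. by case: p => [|[|[|[|p]]]] //=; exact: one_T6. Qed.

Lemma Nrf v p q : (p < 4)%N -> (q < 4)%N -> N (rf v p) (rf v q) = emb (Kz hZ (cv v) p q).
Proof.
rewrite /Kz.
case: p => [|[|[|[|]]]] // _; case: q => [|[|[|[|]]]] // _ /=;
  first [ by rewrite (Nh wf) | by rewrite (Nc M a b c v 0) | by rewrite (Nc M a b c v 1) | by rewrite (Nc M a b c v 2)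
        | by rewrite (Nentry_herm wf v) (Nc M a b c v 0) embC
        | by rewrite (Nentry_herm wf v) (Nc M a b c v 1) embC
        | by rewrite (Nentry_herm wf v) (Nc M a b c v 2) embC
        | by rewrite (Nentry_diag wf) emb0
        | by rewrite NentryE | by rewrite (Nentry_herm wf) NentryE embC ].
Qed.

Lemma Kz_nz v p q : (p < 4)%N -> (q < 4)%N -> p != q -> (forall k, (k < 3)%N -> cv v k != zw0) ->
  Kz hZ (cv v) p q != zw0.
Proof.
move=> hp hq pq hnz; rewrite /Kz.
case: p hp pq => [|[|[|[|]]]] // _; case: q hq => [|[|[|[|]]]] // _ pq /=;
  first [ by rewrite eqxx in pq | exact: hnz | apply: zcj_nz; exact: hnz
   | by case: codes_nz => n1 n2 n3; move: (cz_nz (ncode_codes M a b) n1) (cz_nz (ncode_codes M a c) n2)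
        (cz_nz (ncode_codes M b c) n3) => /andP[? ?] /andP[? ?] /andP[? ?] ].
Qed.

Lemma fwd_main : induced_mixed_triangle M S \/ induced_K4_2pos_1semineg M S.
Proof.
have s01 : sf 0 != sf 1 by apply: s_neq.
have s02 : sf 0 != sf 2 by apply: s_neq.
have s12 : sf 1 != sf 2 by apply: s_neq.
case: (pickP (fun v => (v \in S) && [&& v != sf 0, v != sf 1 & v != sf 2])) =>
   [v /andP[hv /and3P[n0 n1 n2]] | hnone].
- right.
  have hE := extra_inE hv n0 n1 n2; case: (extra_props hE) => hnz hK _.
  have hS : S = [set uf v 0; uf v 1; uf v 2; uf v 3].
    apply/setP => x; rewrite !inE /uf /=; apply/idP/idP.
    + move=> hxS; case: (eqVneq x (sf 0)) => [//|m0]; case: (eqVneq x (sf 1)) => [//|m1].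
      case: (eqVneq x (sf 2)) => [//|m2].
      by rewrite (two_extras hxS m0 m1 m2 hv n0 n1 n2) eqxx ?orbT.
    + by rewrite -!orbA => /or4P[]/eqP->.
  have hU : forall x, x \in S -> exists2 p, (p < 4)%N & x = uf v p.
    move=> x; rewrite hS !inE -!orbA => /or4P[]/eqP ->; [exists 0%N | exists 1%N | exists 2%N | exists 3%N] => //.
  split; first by rewrite hS card4 //= !inE !negb_or s01 s02 s12 !(eq_sym _ v) n0 n1 n2.
  split.
    move=> x y /hU [p hp ->] /hU [q hq ->] pq.
    have pq' : p != q by apply: contraNneq pq => ->.
    rewrite -(Nentry_ug wf) (pair_rel wf (huf v p) (huf v q)) (Nrf v hp hq).
    rewrite !mulf_neq0 //; first exact: T6_neq0 (muf_T6 p).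
      by apply: T6_neq0; case: (T6P (muf_T6 q)).
    by rewrite emb_nz Kz_nz.
  exists (uf v 0), (uf v 1), (uf v 2), (uf v 3); split; first exact: hS.
  have W : forall p q r s, (p < 4)%N -> (q < 4)%N -> (r < 4)%N -> (s < 4)%N ->
      cycle4_weight M (uf v p) (uf v q) (uf v r) (uf v s) = emb (wz (Kz hZ (cv v)) p q r s).
    move=> p q r s hp hq hr hs.
    rewrite (weight_rel wf (muf_T6 p) (muf_T6 q) (muf_T6 r) (muf_T6 s) (huf v p) (huf v q) (huf v r) (huf v s)).
    by rewrite /cycle4_weight !Nrf // /wz !embM.
  rewrite !W //.
  move: hK; rewrite /K4c => /andP[/eqP h1 /eqP h2]; split.
  + by rewrite -[RHS]h1 /= /positive_w -emb1 !emb_eq.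
  + by rewrite -[RHS]h2 /= /seminegative_w -embmw -embmwb !emb_eq.
- left.
  have hS : S = [set sf 0; sf 1; sf 2].
    apply/setP => x; rewrite !inE; apply/idP/idP.
    + move=> hxS; have := hnone x; rewrite /= hxS /=.
      by case: (eqVneq x (sf 0)) => [//|]; case: (eqVneq x (sf 1)) => [//|]; case: (eqVneq x (sf 2)).
    + by rewrite -!orbA => /or3P[]/eqP->.
  split; first by rewrite hS card3 //= !inE !negb_or s01 s02 s12.
  move=> x y; rewrite hS !inE -!orbA => /or3P[]/eqP-> /or3P[]/eqP-> //; rewrite ?eqxx // => _;
    apply: s_adj => //.
Qed.
End Fwd.

Lemma rank_le3' n (N : 'M[algC]_n) (a b c : 'I_n) :
  (forall v, exists x0 x1 x2 : algC, forall w, N v w = x0 * N a w + x1 * N b w + x2 * N c w) ->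
  (\rank N <= 3)%N.
Proof.
move=> H.
pose R := rowsub (fun i : 'I_3 => tri a b c i) N.
have sub : (N <= R)%MS.
  apply/row_subP => v; have [x0 [x1 [x2 h]]] := H v; apply/submxP.
  exists (\row_(i < 3) match val i with 0 => x0 | 1 => x1 | _ => x2 end%N).
  by apply/rowP => w; rewrite !mxE sum3 !mxE /=; exact: h.
by apply: leq_trans (mxrankS sub) (rank_leq_row _).
Qed.

Lemma det3f_ext (h h' : nat -> nat -> algC) : (forall i j, h i j = h' i j) -> det3f h = det3f h'.
Proof. by move=> E; rewrite /det3f !E. Qed.

Section Bwd.
Variables (n : nat) (M : mixed_graph n).
Hypothesis wf : mixed_wf M.
Variable S : {set 'I_n}.
Hypothesis reps : twin_reps M S.
Local Notation N := (Nentry M).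

Lemma NmxE v w : Nmx M v w = N v w. Proof. by rewrite mxE. Qed.

Lemma code_nz x y : ug M x y -> ncode M x y != 0%N.
Proof. by move=> h; apply/eqP => e; move: h; rewrite -(Nentry_ug wf) NentryE e emb0 eqxx. Qed.

Lemma nzc x y : ug M x y -> ncode M x y \in nzcodes.
Proof. by move=> h; move: (code_nz h) (ncode_codes M x y); rewrite !inE => /negPf->. Qed.

Lemma rank_ge3_emb a b c : detg Zops (hz M a b c) != zw0 -> (3 <= \rank (Nmx M))%N.
Proof.
move=> hD; apply: (rank_ge3 (a := a) (b := b) (c := c)).
rewrite (det3f_ext (h' := fun i j => N (tri a b c i) (tri a b c j))); last by move=> i j; rewrite mxE.
by rewrite (det_emb wf) emb_nz.
Qed.

Lemma rep_row v : exists2 u, u \in S & exists2 l, l \in T6 & forall j, N v j = l * N u j.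
Proof.
case: reps => hcov _; have [u hu tw] := hcov v; exists u => //.
have [l hl hrow] := twins_prop wf tw.
exists l^*; first by case: (T6P hl).
exact: row_inv hl hrow.
Qed.

Lemma bwd_tri : induced_mixed_triangle M S -> \rank (Nmx M) = 3%N.
Proof.
case=> h3 hadj.
have hu := enum_uniq (mem S).
move: h3 hu; rewrite cardE; case he : (enum (mem S)) => [|a [|b [|c [|? ?]]]] //= _.
move=> hu'.
have ab : a != b by apply: contraTneq hu' => ->; rewrite /= !inE eqxx.
have ac : a != c by apply: contraTneq hu' => ->; rewrite /= !inE eqxx ?orbT.
have bc : b != c by apply: contraTneq hu' => ->; rewrite /= !inE eqxx ?orbT ?andbF.
have mS : forall x, (x \in S) = (x \in [:: a; b; c]) by move=> x; rewrite -he mem_enum.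
have iA : a \in S by rewrite mS inE eqxx.
have iB : b \in S by rewrite mS !inE eqxx orbT.
have iC : c \in S by rewrite mS !inE eqxx !orbT.
have gab := hadj _ _ iA iB ab; have gac := hadj _ _ iA iC ac; have gbc := hadj _ _ iB iC bc.
have hD : detg Zops (hz M a b c) != zw0.
  move: C2_ok; rewrite /C2 => /allP/(_ _ (nzc gab))/allP/(_ _ (nzc gac))/allP/(_ _ (nzc gbc)) /andP[+ _].
  exact.
apply/eqP; rewrite eqn_leq (rank_ge3_emb hD) andbT.
apply: (rank_le3' (a := a) (b := b) (c := c)) => v.
have [u hu [l hl hv]] := rep_row v.
move: hu; rewrite mS !inE => /or3P[]/eqP eu; subst u.
- by exists l, 0, 0 => w; rewrite !NmxE hv !mul0r !addr0.
- by exists 0, l, 0 => w; rewrite !NmxE hv !mul0r add0r addr0.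
- by exists 0, 0, l => w; rewrite !NmxE hv !mul0r !add0r.
Qed.

Lemma bwd_K4 : induced_K4_2pos_1semineg M S -> \rank (Nmx M) = 3%N.
Proof.
case=> h4 [hadj [a [b [c [d [hS [hc1 hc2]]]]]]].
have hu : uniq [:: a; b; c; d].
  apply/card_uniqP; transitivity #|S|; last by rewrite h4.
  by rewrite hS; apply: eq_card => w; rewrite !inE -!orbA.
have mS : forall x, (x \in S) = (x \in [:: a; b; c; d]) by move=> x; rewrite hS !inE -!orbA.
have iA : a \in S by rewrite mS inE eqxx.
have iB : b \in S by rewrite mS !inE eqxx orbT.
have iC : c \in S by rewrite mS !inE eqxx !orbT.
have iD : d \in S by rewrite mS !inE eqxx !orbT.
move: hu => /= /and4P[]; rewrite !inE !negb_or => /and3P[ab ac ad] /andP[bc bd] cd _.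
have gab := hadj _ _ iA iB ab; have gac := hadj _ _ iA iC ac; have gbc := hadj _ _ iB iC bc.
have gda := hadj _ _ iD iA (ltac:(by rewrite eq_sym)); have gdb := hadj _ _ iD iB (ltac:(by rewrite eq_sym)).
have gdc := hadj _ _ iD iC (ltac:(by rewrite eq_sym)).
have W : forall p q r s, (p < 4)%N -> (q < 4)%N -> (r < 4)%N -> (s < 4)%N ->
    cycle4_weight M (rf a b c d p) (rf a b c d q) (rf a b c d r) (rf a b c d s) =
    emb (wz (Kz (hz M a b c) (cvec M a b c d)) p q r s).
  by move=> p q r s hp hq hr hs; rewrite /cycle4_weight !(Nrf wf) // /wz !embM.
have hK : K4c (hz M a b c) (cvec M a b c d).
  rewrite /K4c; apply/andP; split; apply/eqP.
  - rewrite -[RHS]hc1 (W 0 1 2 3)%N // (W 0 1 3 2)%N // (W 0 2 1 3)%N //.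
    by rewrite /= /positive_w -emb1 !emb_eq.
  - rewrite -[RHS]hc2 (W 0 1 2 3)%N // (W 0 1 3 2)%N // (W 0 2 1 3)%N //.
    by rewrite /= /seminegative_w -embmw -embmwb !emb_eq.
move: C2_ok; rewrite /C2 => /allP/(_ _ (nzc gab))/allP/(_ _ (nzc gac))/allP/(_ _ (nzc gbc))
  /andP[hD /allP/(_ _ (nzc gda))/allP/(_ _ (nzc gdb))/allP/(_ _ (nzc gdc))/implyP/(_ hK)/eqP hB].
apply/eqP; rewrite eqn_leq (rank_ge3_emb hD) andbT.
pose h := fun i j => emb (hz M a b c i j).
pose cdv := fun k => emb (cvec M a b c d k).
have hD' : detg Cops h != 0 by rewrite -emb_detg emb_nz.
pose xs := xsol h cdv.
have E : forall j k, (j < 3)%N -> (k < 3)%N -> N (tri a b c j) (tri a b c k) = h j k.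
  by move=> j k hj hk; exact: (Nh wf a b c hj hk).
have F : forall k, N d (tri a b c k) = cdv k by move=> k; exact: Nc.
have hdS : forall u, u \in S -> N d u = xs 0%N * N a u + xs 1%N * N b u + xs 2%N * N c u.
  move=> u; rewrite mS !inE ?orbF => /or4P[]/eqP ->.
  - have := xsol_row cdv (k:=0%N) isT hD'; rewrite -F -!E //; exact.
  - have := xsol_row cdv (k:=1%N) isT hD'; rewrite -F -!E //; exact.
  - have := xsol_row cdv (k:=2%N) isT hD'; rewrite -F -!E //; exact.
  - have := xsol_self cdv hD'; rewrite -emb_Bg hB emb0 mul0r (Nentry_diag wf).
    rewrite (Nentry_herm wf d a) (Nentry_herm wf d b) (Nentry_herm wf d c).
    by rewrite (F 0%N) (F 1%N) (F 2%N) => ->.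
have hdw : forall w, N d w = xs 0%N * N a w + xs 1%N * N b w + xs 2%N * N c w.
  move=> w; have [u' hu' [l hl hw]] := rep_row w.
  have col : forall y, N y w = l^* * N y u'.
    by move=> y; rewrite (Nentry_herm wf w y) hw rmorphM /= -(Nentry_herm wf u' y).
  rewrite !col (hdS u' hu'); ring.
apply: (rank_le3' (a := a) (b := b) (c := c)) => v.
have [u hu [l hl hv]] := rep_row v.
move: hu; rewrite mS !inE ?orbF => /or4P[]/eqP eu; subst u.
- by exists l, 0, 0 => w; rewrite !NmxE hv !mul0r !addr0.
- by exists 0, l, 0 => w; rewrite !NmxE hv !mul0r add0r addr0.
- by exists 0, 0, l => w; rewrite !NmxE hv !mul0r !add0r.
- exists (l * xs 0%N), (l * xs 1%N), (l * xs 2%N) => w; rewrite !NmxE hv hdw; ring.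
Qed.
End Bwd.

Theorem theorem5p14 (n : nat) (M : mixed_graph n) :
  mixed_wf M -> mixed_connected M ->
  forall S : {set 'I_n}, twin_reps M S ->
  (\rank (Nmx M) = 3%N <->
     induced_mixed_triangle M S \/ induced_K4_2pos_1semineg M S).
Proof.
move=> wf conn S reps; split; last by case; [exact: bwd_tri | exact: bwd_K4].
move=> hr.
have herm : forall i j, Nmx M j i = (Nmx M i j)^* by move=> i j; rewrite !mxE (Nentry_herm wf).
have [a [b [c [x0 [x1 [x2 [hx hdet]]]]]]] := rank_eq3 herm hr.
have hx' : forall v w, Nentry M v w = x0 v * Nentry M a w + x1 v * Nentry M b w + x2 v * Nentry M c w.
  by move=> v w; have := hx v w; rewrite !mxE.
have hDz : detg Zops (hz M a b c) != zw0.
  rewrite -emb_nz -(det_emb wf); move: hdet.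
  by rewrite (det3f_ext (h' := fun i j => Nentry M (tri a b c i) (tri a b c j))) // => i j; rewrite mxE.
have [hcov _] := reps.
have [s0 hs0 /(twins_prop wf) [l0 hl0 e0]] := hcov a.
have [s1 hs1 /(twins_prop wf) [l1 hl1 e1]] := hcov b.
have [s2 hs2 /(twins_prop wf) [l2 hl2 e2]] := hcov c.
apply: (fwd_main wf conn reps hx' hDz (sf := tri s0 s1 s2)
          (lf := fun i => match i with 0 => l0 | 1 => l1 | _ => l2 end%N)).
- by case=> [|[|i]].
- by case=> [|[|i]].
- by case=> [|[|i]].
Qed.
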